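(* Fix any input (any fixed initial content of the tape). The set of programs whose computation on this input falls off the tape before reaching the halt state and before repeating a state has asymptotic probability one.
   Context: Model of computation: a single head reads and writes symbols $0,1$ on a one-way infinite tape with cells indexed $0,1,2,\dots$; the head starts on cell $0$. An $n$-state program has states $Q=\{q_1,\dots,q_n\}$, with $q_1$ the start state, plus a separate halt state not in $Q$. A program is a function $p: Q\times\{0,1\}\to (Q\cup\{\mathrm{halt}\})\times\{0,1\}\times\{L,R\}$; $p(q,i)=\langle r,j,d\rangle$ means: in state $q$ reading $i$, write $j$, move one cell in direction $d$, enter state $r$. The computation stops when the halt state is reached (''halting'') or when the head attempts to move left from cell $0$ (''falls off the tape''); in the latter case the target state of that transition is not regarded as reached. The computation ''repeats a state'' if some state occurs twice in the sequence of states $q_1=s_0,s_1,\dots$ reached at successive steps. Let $P_n$ be the set of all $n$-state programs; the asymptotic probability of a set $B$ of programs is $\mu(B)=\lim_{n\to\infty}|B\cap P_n|/|P_n|$, when this limit exists. *)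

(* Defs.v *)
From HB Require Import structures.
From mathcomp Require Import all_boot all_order all_algebra.
From mathcomp Require Import all_classical all_reals all_analysis.
Set Implicit Arguments. Unset Strict Implicit. Unset Printing Implicit Defensive.
Import Order.TTheory GRing.Theory Num.Theory.

(* Programs with n.+1 states q_1..q_{n+1}, represented by 'I_n.+1
   (ord0 is the start state q_1).  A transition value (r, j, d):
   r : option 'I_n.+1  (None = halt state), j : bool (symbol written,
   true = 1), d : bool (direction: true = R, false = L). *)
Definition prog (n : nat) :=
  {ffun 'I_n.+1 * bool -> option 'I_n.+1 * bool * bool}.

Definition tape := nat -> bool.

Definition config (n : nat) := ('I_n.+1 * nat * tape)%type.

Inductive outcome (n : nat) :=
| Halted
| Fell
| Cont of config n.

Definition step (n : nat) (p : prog n) (c : config n) : outcome n :=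
  let: (q, h, t) := c in
  let: (r, j, d) := p (q, t h) in
  let t' : tape := fun i => if i == h then j else t i in
  if (~~ d) && (h == 0)%N then Fell n
  else match r with
       | None => Halted n
       | Some r' => Cont (r', (if d then h.+1 else h.-1), t')
       end.

Fixpoint run (n : nat) (p : prog n) (x : tape) (k : nat) : option (config n) :=
  match k with
  | 0 => Some (ord0, 0%N, x)
  | k'.+1 =>
      match run p x k' with
      | Some c => match step p c with
                  | Cont c' => Some c'
                  | _ => None
                  end
      | None => None
      end
  end.

Definition falls_off_fresh (n : nat) (p : prog n) (x : tape) : Prop :=
  exists k c, run p x k = Some c /\ step p c = Fell n /\
    (forall i j ci cj, (i <= k)%N -> (j <= k)%N ->
       run p x i = Some ci -> run p x j = Some cj ->
       ci.1.1 = cj.1.1 -> i = j).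

(* Main.v *)
Require Import Defs.
From HB Require Import structures.
From mathcomp Require Import all_boot all_order all_algebra.
From mathcomp Require Import all_classical all_reals all_analysis.
From mathcomp Require Import ring lra zify.
Import Order.TTheory GRing.Theory Num.Theory.
Set Implicit Arguments. Unset Strict Implicit.

Section Fresh.
Variables (n : nat) (x : tape).
Local Notation P := (prog n).
Local Notation V := (option 'I_n.+1 * bool * bool)%type.

Definition key (c : config n) : 'I_n.+1 * bool := (c.1.1, c.2 c.1.2).
Definition st i (p : P) : 'I_n.+1 := if run p x i is Some c then c.1.1 else ord0.
Definition pos t (p : P) : nat := if run p x t is Some c then c.1.2 else 0%N.
Definition kp t (p : P) := if run p x t is Some c then key c else (ord0, false).
Definition alive t (p : P) : bool :=
  (run p x t != None) && uniq [seq st i p | i <- iota 0 t.+1].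
Definition upd (p : P) k (v : V) : P := [ffun a => if a == k then v else p a].

Lemma run_None_mono (p : P) i j : (i <= j)%N -> run p x i = None -> run p x j = None.
Proof.
move=> /subnK <-; elim: (j - i)%N => [|m IH] //= H.
by rewrite IH.
Qed.

Lemma step_ext (p p' : P) c : p' (key c) = p (key c) -> step p' c = step p c.
Proof. by case: c => [[q h] t]; rewrite /step /key /= => ->. Qed.

Lemma alive_run t p : alive t p -> forall i, (i <= t)%N -> exists c, run p x i = Some c.
Proof.
move=> /andP[H _] i Hi; case E: (run p x i) => [c|]; first by exists c.
by move: H; rewrite (run_None_mono Hi E).
Qed.

Lemma alive_st t p i j : alive t p -> (i <= t)%N -> (j <= t)%N -> st i p = st j p -> i = j.
Proof.
move=> /andP[_ U] Hi Hj E.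
have := nth_uniq ord0 (s := [seq st i p | i <- iota 0 t.+1]) (i := i) (j := j).
rewrite size_map size_iota !ltnS Hi Hj => /(_ isT isT U).
rewrite !(nth_map 0%N) ?size_iota ?ltnS // !nth_iota ?ltnS // !add0n E eqxx.
by move=> /esym/eqP.
Qed.

Lemma updE p k v a : upd p k v a = if a == k then v else p a.
Proof. by rewrite ffunE. Qed.

Lemma run_upd t p v : alive t p -> forall i, (i <= t)%N ->
  run (upd p (kp t p) v) x i = run p x i.
Proof.
move=> Ha; elim=> [|i IH] Hi //=.
rewrite IH ?(ltnW Hi) //.
have [c Hc] := alive_run Ha (ltnW Hi); rewrite Hc.
rewrite (@step_ext p) // updE.
case: eqP => // E.
have [ct Hct] := alive_run Ha (leqnn t).
move: E; rewrite /kp Hct /key => -[E _].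
have := alive_st Ha (ltnW Hi) (leqnn t); rewrite /st Hc Hct => /(_ E) Eit.
by rewrite Eit ltnn in Hi.
Qed.


Section Inv.
Variables (t : nat) (p : P) (v : V).
Hypothesis Ha : alive t p.
Local Notation p' := (upd p (kp t p) v).

Lemma st_upd i : (i <= t)%N -> st i p' = st i p.
Proof. by move=> Hi; rewrite /st run_upd. Qed.
Lemma pos_upd : pos t p' = pos t p.
Proof. by rewrite /pos run_upd. Qed.
Lemma kp_upd : kp t p' = kp t p.
Proof. by rewrite /kp run_upd. Qed.
Lemma alive_upd : alive t p'.
Proof.
move: Ha => /andP[H U]; apply/andP; split; first by rewrite run_upd.
suff -> : [seq st i p' | i <- iota 0 t.+1] = [seq st i p | i <- iota 0 t.+1] by [].
apply/eq_in_map => i; rewrite mem_iota add0n => /andP[_ Hi].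
by rewrite st_upd.
Qed.
Lemma upd_kp : p' (kp t p) = v.
Proof. by rewrite updE eqxx. Qed.
End Inv.

Definition tau t (q : P * V) : P * V :=
  if alive t q.1 then (upd q.1 (kp t q.1) q.2, q.1 (kp t q.1)) else q.

Lemma tauK t : cancel (tau t) (tau t).
Proof.
case=> p v; rewrite /tau /=; case Ha: (alive t p) => /=; last by rewrite Ha.
rewrite alive_upd //= kp_upd // upd_kp //; congr (_, _).
by apply/ffunP => a; rewrite !updE; case: eqP => // ->.
Qed.

Local Open Scope ring_scope.
Lemma dc (R : realType) t (F : P -> V -> R) :
  (forall p v w, alive t p -> F (upd p (kp t p) v) w = F p w) ->
  (\sum_(p | alive t p) F p (p (kp t p))) * #|{: V}|%:R =
  \sum_(p | alive t p) \sum_(v : V) F p v.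
Proof.
move=> HF.
rewrite mulr_suml.
transitivity (\sum_(p | alive t p) \sum_(v : V) F p (p (kp t p))).
  by apply: eq_bigr => p _; rewrite sumr_const mulr_natr.
transitivity (\sum_(p | alive t p) \sum_(v : V) F (upd p (kp t p) v) v); last first.
  by apply: eq_bigr => p Hp; apply: eq_bigr => v _; rewrite HF.
rewrite !pair_big /=.
rewrite (reindex_inj (can_inj (tauK t))) /=.
apply: eq_big => -[p v] /=; rewrite /tau /=.
  by case Ha: (alive t p) => /=; [rewrite (alive_upd _ Ha) | rewrite Ha].
case Ha: (alive t p) => /= Hc; last by move: Hc; rewrite Ha.
by rewrite kp_upd // upd_kp.
Qed.
Local Close Scope ring_scope.

Lemma iotaSr m : iota 0 m.+1 = rcons (iota 0 m) m.
Proof. by rewrite -addn1 iotaD add0n cats1. Qed.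

Lemma alive_succ t p : alive t.+1 p -> alive t p.
Proof.
move=> /andP[H U]; apply/andP; split.
  by apply/eqP => E; move/eqP: H; apply; rewrite /= E.
by move: U; rewrite iotaSr map_rcons rcons_uniq => /andP[].
Qed.

Lemma alive_succ_pos t p : alive t.+1 p ->
  ((p (kp t p)).2 = true /\ pos t.+1 p = (pos t p).+1) \/
  ((p (kp t p)).2 = false /\ (0 < pos t p) /\ pos t.+1 p = (pos t p).-1).
Proof.
move=> Ha; have [c Hc] := alive_run (alive_succ Ha) (leqnn t).
have [c' Hc'] := alive_run Ha (leqnn t.+1).
rewrite /pos /kp Hc Hc'; move: Hc'; rewrite /= Hc.
case: c Hc => [[q h] tp] Hc; rewrite /step /key /=.
case: (p (q, tp h)) => [[r j] d] /=.
case: d => /=.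
  by case: r => // r [<-]; left.
case: eqP => // Hh; case: r => // r [<-]; right; split => //; split => //.
by rewrite lt0n; apply/eqP.
Qed.

Definition bad t p (v : V) : bool :=
  if v.1.1 is Some r then r \in [seq st i p | i <- iota 0 t.+1] else true.

Lemma compl m p : ~ falls_off_fresh p x ->
  alive m p || has (fun s => alive s p && bad s p (p (kp s p))) (iota 0 m).
Proof.
move=> NF; elim: m => [|m IH]; first by rewrite /alive /=.
rewrite iotaSr -cats1 has_cat /= orbF.
case/orP: IH => [Ha|->]; last by rewrite !orbT.
have [c Hc] := alive_run Ha (leqnn m).
rewrite Ha /=.
case Es: (step p c) => [||c'].
- have Hb: bad m p (p (kp m p)).
    move: Es; rewrite /bad /kp Hc; case: c Hc => [[q h] tp] Hc.
    rewrite /step /key /=; case: (p (q, tp h)) => [[r j] d] /=.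
    by case: ifP => //; case: r.
  by rewrite Hb !orbT.
- exfalso; apply: NF; exists m, c; split => //; split => //.
  move=> i j ci cj Hi Hj Hci Hcj E; apply: (alive_st Ha Hi Hj).
  by rewrite /st Hci Hcj.
- have Hr: run p x m.+1 = Some c' by rewrite /= Hc Es.
  case Hb: (bad m p (p (kp m p))); first by rewrite !orbT.
  apply/orP; left; apply/andP; split; first by rewrite Hr.
  rewrite iotaSr map_rcons rcons_uniq.
  move: Ha => /andP[_ ->]; rewrite andbT.
  move: Hb Es; rewrite /bad /kp Hc /st Hr; case: c Hc => [[q h] tp] Hc.
  rewrite /step /key /=; case: (p (q, tp h)) => [[r j] d] /=.
  case: ifP => //; case: r => // r _ Hn [<-] /=.
  by rewrite Hn.
Qed.

Section Real.
Variable R : realType.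
Local Open Scope ring_scope.

Definition cA := #|{: option 'I_n.+1 * bool}|.

Lemma cA_E : cA = (n.+2 * 2)%N.
Proof. by rewrite /cA card_prod card_option card_ord card_bool. Qed.

Lemma cV_E : #|{: V}| = (cA * 2)%N.
Proof. by rewrite card_prod card_bool. Qed.

Lemma sumV_snd (g : bool -> R) :
  \sum_(v : V) g v.2 = cA%:R * (g true + g false).
Proof.
rewrite -(pair_bigA _ (fun a d => g d)) /=.
under eq_bigr do rewrite big_bool.
by rewrite sumr_const mulr_natl.
Qed.

Lemma sumV_r (g : option 'I_n.+1 -> R) :
  \sum_(v : V) g v.1.1 = 4 * \sum_r g r.
Proof.
rewrite -(pair_bigA _ (fun a d => g a.1)) /=.
under eq_bigr do rewrite big_bool.
rewrite -(pair_bigA _ (fun r j => g r + g r)) /=.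
under eq_bigr do rewrite big_bool.
rewrite big_distrr /=; apply: eq_bigr => r _.
by rewrite -!mulr2n -mulrnA mulr_natl.
Qed.


Lemma cA_neq0 : (cA%:R : R) != 0.
Proof. by rewrite cA_E pnatr_eq0. Qed.

Lemma step_bound t (g : nat -> R) : (forall h, 0 <= g h) ->
  (\sum_(p | alive t.+1 p) g (pos t.+1 p)) * 2 <=
  \sum_(p | alive t p) (g (pos t p).+1 + (if pos t p == 0%N then 0 else g (pos t p).-1)).
Proof.
move=> g0.
pose G (p : P) (v : V) := if v.2 then g (pos t p).+1
  else if pos t p == 0%N then 0 else g (pos t p).-1.
have G0 p v : 0 <= G p v by rewrite /G; case: ifP => _ //; case: ifP.
have H1 : \sum_(p | alive t.+1 p) g (pos t.+1 p) <= \sum_(p | alive t p) G p (p (kp t p)).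
  rewrite [leLHS]big_mkcond [leRHS]big_mkcond /=; apply: ler_sum => p _.
  case: ifP => Ha1; last by case: ifP.
  rewrite (alive_succ Ha1) /G.
  case: (alive_succ_pos Ha1) => [[-> ->]|[-> [Hp ->]]] //.
  by rewrite ifN ?lt0n_neq0.
have H2 := dc (F := G) (t := t).
have HF p v w : alive t p -> G (upd p (kp t p) v) w = G p w.
  by move=> Ha; rewrite /G pos_upd.
move: (H2 HF); rewrite cV_E natrM => {}H2.
have H3 : \sum_(p | alive t p) \sum_(v : V) G p v =
  cA%:R * \sum_(p | alive t p) (g (pos t p).+1 + (if pos t p == 0%N then 0 else g (pos t p).-1)).
  rewrite big_distrr /=; apply: eq_bigr => p _.
  by rewrite (sumV_snd (fun d => if d then g (pos t p).+1
     else if pos t p == 0%N then 0 else g (pos t p).-1)).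
have H4 : (\sum_(p | alive t p) G p (p (kp t p))) * 2 =
  \sum_(p | alive t p) (g (pos t p).+1 + (if pos t p == 0%N then 0 else g (pos t p).-1)).
  by apply: (mulfI cA_neq0); rewrite -H3 -H2 mulrCA.
by rewrite -H4 ler_pM2r.
Qed.


Definition Acnt t : R := \sum_(p | alive t p) 1.
Definition Psi t : R := \sum_(p | alive t p) (pos t p).+1%:R.
Definition phi (h : nat) : R := 2 - (h.+1%:R)^-1.
Definition Phi t : R := \sum_(p | alive t p) phi (pos t p).
Definition Kc (M : nat) : R := ((M + 2) ^ 3)%N%:R.

Lemma alive0 p : alive 0 p.
Proof. by []. Qed.

Lemma sum_alive0 (g : nat -> R) :
  \sum_(p | alive 0 p) g (pos 0 p) = #|{: P}|%:R * g 0%N.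
Proof.
rewrite (eq_bigl predT) //; under eq_bigr do rewrite /pos /=.
by rewrite sumr_const mulr_natl.
Qed.

Lemma Psi_le t : Psi t <= #|{: P}|%:R.
Proof.
elim: t => [|t IH].
  by rewrite /Psi (sum_alive0 (fun h => h.+1%:R)) mulr1.
apply: le_trans IH.
rewrite -(@ler_pM2r _ 2) //.
rewrite /Psi; apply: (le_trans (step_bound t (g := fun h : nat => (h.+1%:R : R)) _)) => //.
rewrite mulr_suml; apply/ler_sum => p _.
case: (pos t p) => [|k] /=; first by rewrite addr0 mul1r.
rewrite -!natr1; lra.
Qed.

Lemma phi_ge0 h : 0 <= phi h.
Proof.
rewrite /phi subr_ge0; apply: (@le_trans _ _ 1); last lra.
by rewrite invf_le1 ?ler1n ?ltr0n.
Qed.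

Lemma Kc_ge8 M : 8 <= Kc M.
Proof.
rewrite /Kc (_ : 8 = (2 ^ 3)%N%:R) // ler_nat.
by rewrite leq_exp2r // leq_addl.
Qed.

Lemma phi_step M h :
  phi h.+1 + (if h == 0%N then 0 else phi h.-1) <= phi h * 2 - ((h < M)%N)%:R / Kc M.
Proof.
have K8 := Kc_ge8 M.
have K0 : 0 < Kc M by apply: lt_le_trans K8.
have Ki : (Kc M)^-1 <= 8^-1 by rewrite lef_pV2 ?posrE.
have Ki0 : 0 <= (Kc M)^-1 by rewrite invr_ge0 ltW.
case: h => [|k] /=.
  rewrite /phi addr0 invr1.
  case: (0 < M)%N; rewrite ?mul1r ?mul0r; lra.
rewrite /phi.
set a : R := k%:R.
have a0 : 0 <= a by rewrite /a ler0n.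
have E1 : (k.+3)%:R = a + 3 by rewrite /a -!natr1; ring.
have E2 : (k.+2)%:R = a + 2 by rewrite /a -!natr1; ring.
have E3 : (k.+1)%:R = a + 1 by rewrite /a -!natr1; ring.
rewrite E1 E2 E3.
have Hid : 1/(a+1) + 1/(a+3) - 2/(a+2) = 2 / ((a+1)*(a+2)*(a+3)).
  field; by apply/and3P; split; apply: lt0r_neq0; lra.
suff : (((k.+1 < M)%N)%:R / Kc M) <= 2 / ((a+1)*(a+2)*(a+3)).
  rewrite -Hid; lra.
case: ltnP => HkM; last by rewrite mul0r divr_ge0 // ?mulr_ge0 //; lra.
rewrite mul1r.
have D0 : 0 < (a+1)*(a+2)*(a+3) by rewrite !mulr_gt0 //; lra.
apply: (@le_trans _ _ ((a+1)*(a+2)*(a+3))^-1).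
  rewrite lef_pV2 ?posrE //.
  rewrite -E1 -E2 -E3 -!natrM /Kc ler_nat.
  rewrite (_ : ((M + 2) ^ 3 = (M+2) * (M+2) * (M+2))%N); last by rewrite !expnS expn0 muln1 mulnA.
  by rewrite !leq_mul //; lia.
rewrite ler_pdivlMr // mulVf ?lt0r_neq0 //; lra.
Qed.


Definition Bc M t : R := \sum_(p | alive t p) ((pos t p < M)%N)%:R.
Local Notation cP := (#|{: P}|%:R : R).

Lemma Phi0 : Phi 0 = cP.
Proof. by rewrite /Phi (sum_alive0 phi) /phi invr1; lra. Qed.

Lemma Phi_ge0 t : 0 <= Phi t.
Proof. by apply: sumr_ge0 => p _; apply: phi_ge0. Qed.

Lemma Phi_step M t : Phi t.+1 * 2 + Bc M t / Kc M <= Phi t * 2.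
Proof.
rewrite -lerBrDr.
apply: le_trans (step_bound t (g := phi) phi_ge0) _.
rewrite /Phi /Bc mulr_suml mulr_suml -sumrB; apply: ler_sum => p _.
exact: phi_step.
Qed.

Lemma Bc_sum M T : \sum_(t < T) Bc M t <= 2 * Kc M * cP.
Proof.
have K0 : 0 < Kc M by apply: lt_le_trans (Kc_ge8 M).
suff H : (\sum_(t < T) Bc M t) / Kc M + Phi T * 2 <= Phi 0 * 2.
  have := Phi_ge0 T; rewrite Phi0 in H => HT.
  have H2 : (\sum_(t < T) Bc M t) / Kc M <= cP * 2 by lra.
  rewrite ler_pdivrMr // in H2; apply: le_trans H2 _.
  by rewrite le_eqVlt; apply/orP; left; apply/eqP; ring.
elim: T => [|T IH]; first by rewrite big_ord0 mul0r add0r.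
rewrite big_ord_recr /= mulrDl.
have := Phi_step M T; lra.
Qed.

Lemma Acnt_le M t : Acnt t <= Bc M t + cP / (M.+1)%:R.
Proof.
apply: (@le_trans _ _ (Bc M t + Psi t / (M.+1)%:R)); last first.
  by rewrite lerD2l ler_pM2r ?invr_gt0 ?ltr0n // Psi_le.
rewrite /Acnt /Bc /Psi mulr_suml -big_split /=; apply: ler_sum => p _.
case: ltnP => H; first by rewrite lerDl divr_ge0.
rewrite add0r ler_pdivlMr ?ltr0n // mul1r ler_nat; lia.
Qed.

Lemma Acnt_mono t s : (t <= s)%N -> Acnt s <= Acnt t.
Proof.
move/subnK <-; elim: (s - t)%N => [|k IH] //=.
apply: le_trans IH; rewrite addSn /Acnt [leRHS]big_mkcond [leLHS]big_mkcond.
apply: ler_sum => p _; case: ifP => H; [by rewrite (alive_succ H) | by case: ifP].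
Qed.

Lemma Acnt_T M T : T%:R * Acnt T <= 2 * Kc M * cP + T%:R * (cP / (M.+1)%:R).
Proof.
have -> : T%:R * Acnt T = \sum_(t < T) Acnt T by rewrite sumr_const card_ord mulr_natl.
apply: (@le_trans _ _ (\sum_(t < T) (Bc M t + cP / (M.+1)%:R))).
  apply: ler_sum => t _; apply: le_trans (Acnt_le M t).
  by apply: Acnt_mono; apply: ltnW.
set y := cP / _.
rewrite big_split /= sumr_const card_ord; apply: lerD; [exact: Bc_sum | by rewrite mulr_natl].
Qed.


Definition Badc t : R := \sum_(p | alive t p && bad t p (p (kp t p))) 1.

Lemma sum_eq1 (w : option 'I_n.+1) : \sum_r ((r == w)%:R : R) = 1.
Proof. by rewrite (bigD1 w) //= eqxx big1 ?addr0 // => r /negbTE ->. Qed.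

Lemma sum_bad t p : \sum_(v : V) ((bad t p v)%:R : R) <= 4 * (t.+2)%:R.
Proof.
pose g (r : option 'I_n.+1) : R :=
  (r == None)%:R + \sum_(i < t.+1) (r == Some (st i p))%:R.
apply: (@le_trans _ _ (4 * \sum_r g r)).
  rewrite -(sumV_r g); apply: ler_sum => v _; rewrite /bad /g.
  case: (v.1.1) => [r|]; last by rewrite lerDl sumr_ge0.
  case Hin: (r \in [seq st i p | i <- iota 0 t.+1]) => /=; last by rewrite add0r sumr_ge0.
  have [i Hi Er] : exists2 i, i \in iota 0 t.+1 & r = st i p by apply/seq.mapP; rewrite Hin.
  rewrite Er; rewrite mem_iota add0n in Hi.
  have Hi' : (i < t.+1)%N by case/andP: Hi.
  by rewrite add0r (bigD1 (Ordinal Hi')) //= eqxx lerDl sumr_ge0.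
rewrite ler_pM2l // /g big_split /= sum_eq1 exchange_big /=.
under eq_bigr do rewrite sum_eq1.
rewrite sumr_const card_ord -natr1 addrC; lra.
Qed.

Lemma Badc_le t : Badc t * (n.+2)%:R <= (t.+2)%:R * cP.
Proof.
have -> : Badc t = \sum_(p | alive t p) ((bad t p (p (kp t p)))%:R : R).
  by rewrite /Badc big_mkcondr /=; apply: eq_bigr => p _; case: ifP.
have HF p v w : alive t p -> ((bad t (upd p (kp t p) v) w)%:R : R) = (bad t p w)%:R.
  move=> Ha; congr (_%:R); rewrite /bad; case: (w.1.1) => // r; congr (_ \in _).
  apply/eq_in_map => i; rewrite mem_iota add0n => /andP[_ Hi].
  by rewrite st_upd.
have := dc HF; rewrite cV_E cA_E => H.
rewrite -(@ler_pM2r _ 4) // -mulrA.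
have -> : ((n.+2)%:R * 4 : R) = (n.+2 * 2 * 2)%N%:R by rewrite -natrM; congr (_%:R); lia.
rewrite H.
apply: (@le_trans _ _ (\sum_(p | alive t p) (4 * (t.+2)%:R))).
  by apply: ler_sum => p _; apply: sum_bad.
apply: (@le_trans _ _ (\sum_(p : P) (4 * (t.+2)%:R))).
  by rewrite [leRHS](bigID (alive t)) /= lerDl sumr_ge0.
set c := (4 * _); rewrite sumr_const -mulr_natr /c le_eqVlt; apply/orP; left; apply/eqP; ring.
Qed.


Lemma sum_ind (b : P -> bool) : \sum_(p | b p) (1:R) = \sum_p ((b p)%:R : R).
Proof. by rewrite big_mkcond; apply: eq_bigr => p _; case: (b p). Qed.

Definition GoodS := [set p : prog n | `[< falls_off_fresh p x >] ]%SET.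

Lemma bad_count T :
  (#|~: GoodS|%:R : R) <= Acnt T + \sum_(t < T) Badc t.
Proof.
rewrite -sum1_card.
apply: (@le_trans _ _ (\sum_p ((~~ (p \in GoodS))%:R : R))).
  by rewrite natr_sum sum_ind le_eqVlt; apply/orP; left; apply/eqP;
     apply: eq_bigr => p _; rewrite inE.
rewrite /Acnt /Badc sum_ind.
under [X in _ <= _ + X]eq_bigr do rewrite sum_ind.
rewrite exchange_big -big_split /=; apply: ler_sum => p _.
case Hg: (p \in GoodS) => /=; first by rewrite addr_ge0 ?sumr_ge0.
have NF : ~ falls_off_fresh p x.
  by move=> F; move: Hg; rewrite inE; move/asboolP: F => ->.
case/orP: (compl T NF) => [-> | Hh]; first by rewrite lerDl sumr_ge0.
case/hasP: Hh => t; rewrite mem_iota add0n => /andP[_ Ht] Hb.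
by rewrite (bigD1 (Ordinal Ht)) //= Hb addrCA lerDl addr_ge0 ?sumr_ge0.
Qed.

Lemma card_P_gt0 : (0 < #|{: P}|)%N.
Proof. by apply/card_gt0P; exists [ffun=> (None, false, false)]. Qed.

Lemma main_bound M T : (0 < T)%N ->
  1 - (#|GoodS|%:R / #|{: P}|%:R : R) <=
  ((2 * (M + 2) ^ 3)%N%:R / T%:R) + 1 / (M.+1)%:R + (T * T.+1)%N%:R / (n.+2)%:R.
Proof.
move=> T0.
have P0 : (0 : R) < #|{: P}|%:R by rewrite ltr0n card_P_gt0.
have -> : 1 - (#|GoodS|%:R / #|{: P}|%:R : R) = #|~: GoodS|%:R / #|{: P}|%:R.
  have E := cardsC GoodS.
  have cn0 : ((#|GoodS| + #|~: GoodS|)%N%:R : R) != 0 by rewrite E lt0r_neq0.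
  rewrite -E; rewrite natrD in cn0 *; field; exact: cn0.
rewrite ler_pdivrMr //.
apply: le_trans (bad_count T) _.
have HA := Acnt_T M T.
have HB : \sum_(t < T) Badc t <= (T * T.+1)%N%:R / (n.+2)%:R * cP.
  apply: (@le_trans _ _ (\sum_(t < T) (T.+1%:R / (n.+2)%:R * cP))).
    apply: ler_sum => t _; have := Badc_le t.
    rewrite -ler_pdivlMr ?ltr0n // => H; apply: le_trans H _.
    rewrite [leLHS]mulrAC (ler_pM2r P0) ler_pM2r ?invr_gt0 ?ltr0n // ler_nat.
    by rewrite ltnS.
  rewrite sumr_const card_ord natrM le_eqVlt; apply/orP; left; apply/eqP.
  rewrite -[LHS]mulr_natl; ring.
have T0r : (0 : R) < T%:R by rewrite ltr0n.
have HA' : Acnt T <= (2 * (M + 2) ^ 3)%N%:R / T%:R * cP + cP / (M.+1)%:R.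
  rewrite -(ler_pM2l T0r) mulrDr; apply: le_trans HA _.
  rewrite /Kc natrM le_eqVlt; apply/orP; left; apply/eqP.
  have Tn0 : (T%:R : R) != 0 by rewrite lt0r_neq0.
  by field; rewrite Tn0 andbT addrC natr1 pnatr_eq0.
rewrite !mulrDl; apply: lerD.
  by rewrite div1r [X in _ <= _ + X]mulrC.
exact: HB.
Qed.

End Real.
End Fresh.

Unset Implicit Arguments.
Import numFieldNormedType.Exports.
Local Open Scope classical_set_scope.
Local Open Scope ring_scope.
Lemma frac_le (R : realType) (a b k : nat) : (0 < k)%N -> (0 < b)%N -> (k * a <= b)%N ->
  a%:R / b%:R <= 1 / k%:R :> R.
Proof.
move=> k0 b0 H.
rewrite ler_pdivrMr ?ltr0n // mul1r mulrC ler_pdivlMr ?ltr0n // -natrM ler_nat.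
by rewrite mulnC.
Qed.

Theorem mainTheorem6 (R : realType) (x : nat -> bool) :
  (fun n : nat =>
     (#|[set p : prog n | `[< falls_off_fresh p x >] ]%SET|%:R
        / #|{: prog n}|%:R : R)) @ \oo --> (1 : R).
Proof.
apply/cvgrPdist_le => e e0.
have e3 : (0 : R) <= 3 / e by rewrite divr_ge0 // ltW.
have HK := archi_boundP e3.
set K0 := Num.Def.archi_bound (3 / e) in HK.
have K0p : (0 < K0)%N.
  rewrite -(ltr0n R); apply: le_lt_trans HK; exact: e3.
pose M := K0.
pose T := (K0 * (2 * (M + 2) ^ 3))%N.
have T0 : (0 < T)%N by rewrite /T muln_gt0 K0p /= muln_gt0 expn_gt0 addn_gt0 orbT.
apply: filterS (nbhs_infty_ge (K0 * (T * T.+1))) => n Hn /=.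
have Pg := card_P_gt0 n.
have f1 : (#|GoodS n x|%:R / #|{: prog n}|%:R : R) <= 1.
  rewrite ler_pdivrMr ?ltr0n // mul1r ler_nat; exact: max_card.
rewrite ger0_norm; last by rewrite subr_ge0.
apply: le_trans (main_bound n x R M T0) _.
have h1 : ((2 * (M + 2) ^ 3)%N%:R / T%:R : R) <= 1 / K0%:R.
  by apply: frac_le => //; rewrite /T mulnC.
have h2 : (1 / (M.+1)%:R : R) <= 1 / K0%:R.
  by rewrite !div1r lef_pV2 ?posrE ?ltr0n // ler_nat.
have h3 : ((T * T.+1)%N%:R / (n.+2)%:R : R) <= 1 / K0%:R.
  by apply: frac_le => //; lia.
have h4 : 3 / (K0%:R : R) < e.
  rewrite ltr_pdivrMr ?ltr0n //.
  by rewrite ltr_pdivrMr // mulrC in HK.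
rewrite div1r in h1 h2 h3.
set k := (K0%:R : R)^-1 in h1 h2 h3 h4 *.
apply: le_trans (lerD (lerD h1 h2) h3) _.
apply: ltW; apply: le_lt_trans h4; rewrite le_eqVlt; apply/orP; left; apply/eqP; ring.
Qed.
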